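(* Let ${}_{\mathfrak Y}\mathfrak B_{\mathfrak X}$ be a left-free graph of bisets, and let $\dagger\in\mathfrak Y$, $*\in\mathfrak X$ be vertices. Then $\pi_1(\mathfrak B,\dagger,* )$ is a left-free biset, of degree (number of left orbits) equal to that of $\bigsqcup_{z\in\rho^{-1}( * )}B_z$.
   Context: Graphs and graphs of groups. A graph is a set $V\sqcup E$ with $x\mapsto x^-\in V$, $x\mapsto\bar x$, $\bar{\bar x}=x$, $x=x^-\iff x=\bar x\iff x\in V$; $x^+=(\bar x)^-$. Graph morphisms commute with these (may send edges to vertices); simplicial ones send edges to edges. A graph of groups is a connected graph with groups $G_x$ and homomorphisms $g\mapsto g^-\colon G_x\to G_{x^-}$, $g\mapsto\bar g\colon G_x\to G_{\bar x}$ ($G_x\to G_{\bar x}\to G_x$ identity, both identity for vertices); fundamental groupoid $\pi_1(\mathfrak X)$: objects $V$, generated by the $x\in\mathfrak X$ and elements of the $G_v$, relations of the $G_v$, $v=1\in G_v$, $x\bar x=1$, $g^-x=xg^+$ ($g^+=(\bar g)^-$); $\pi_1(\mathfrak X,v,w)$ = morphisms from $v$ to $w$. Graphs of bisets: a graph $\mathfrak B$, graph morphisms $\lambda\colon\mathfrak B\to\mathfrak Y$, $\rho\colon\mathfrak B\to\mathfrak X$, $G_{\lambda(z)}$-$G_{\rho(z)}$-bisets $B_z$ and congruences $b\mapsto b^-\colon B_z\to B_{z^-}$, $b\mapsto\bar b\colon B_z\to B_{\bar z}$ (same axioms), $b^+=(\bar b)^-$. Fundamental biset $\pi_1(\mathfrak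 B,\dagger,* )$: $\bigsqcup_{z\in V(\mathfrak B)}\pi_1(\mathfrak Y,\dagger,\lambda(z))\otimes_{G_{\lambda(z)}}B_z\otimes_{G_{\rho(z)}}\pi_1(\mathfrak X,\rho(z),* )$ modulo $q\otimes b^-\otimes p=q\lambda(z)\otimes b^+\otimes\overline{\rho(z)}p$ for edges $z$ ($\lambda(z),\overline{\rho(z)}$ as groupoid morphisms, trivial if vertices), a $\pi_1(\mathfrak Y,\dagger)$-$\pi_1(\mathfrak X,* )$-biset. Left-fibrant: $\rho$ simplicial and for every vertex $v\in\mathfrak B$ and edge $f\in\mathfrak X$ with $f^-=\rho(v)$, the map $\bigsqcup_{e\in\rho^{-1}(f),\,e^-=v}G_{\lambda(v)}\otimes_{G_{\lambda(e)}}B_e\to B_v$, $g\otimes b\mapsto gb^-$, is an isomorphism of $G_{\lambda(v)}$-$G_f$-bisets. Left-free: left-fibrant and every $B_z$ free as a left $G_{\lambda(z)}$-set. *)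

(* Defs.v *)
From Stdlib Require Import List Relations.
Import ListNotations.
Set Implicit Arguments.
Unset Strict Implicit.

Definition tr {A : Type} (P : A -> Type) {x y : A} (h : x = y) (u : P x) : P y :=
  match h in _ = y' return P y' with eq_refl => u end.
Arguments tr {A} P {x y} h u.

Definition quot (T : Type) (R : T -> T -> Prop) : Type :=
  { P : T -> Prop | exists x, forall y, P y <-> clos_refl_sym_trans T R x y }.

Definition bijective {A B : Type} (f : A -> B) : Prop :=
  (forall a a', f a = f a' -> a = a') /\ (forall b, exists a, f a = b).

Record Grp := {
  gcar :> Type;
  gmul : gcar -> gcar -> gcar;
  gone : gcar;
  ginv : gcar -> gcar;
  gmulA : forall a b c, gmul a (gmul b c) = gmul (gmul a b) c;
  gmul1l : forall a, gmul gone a = a;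
  gmul1r : forall a, gmul a gone = a;
  gmulVl : forall a, gmul (ginv a) a = gone;
  gmulVr : forall a, gmul a (ginv a) = gone }.

Record Hom (G H : Grp) := {
  hfun :> G -> H;
  hmul : forall a b, hfun (gmul a b) = gmul (hfun a) (hfun b) }.

Record Biset (G H : Grp) := {
  bcar :> Type;
  lact : G -> bcar -> bcar;
  ract : bcar -> H -> bcar;
  lact1 : forall s, lact (gone G) s = s;
  lactM : forall g g' s, lact (gmul g g') s = lact g (lact g' s);
  ract1 : forall s, ract s (gone H) = s;
  ractM : forall s h h', ract s (gmul h h') = ract (ract s h) h';
  lract : forall g s h, lact g (ract s h) = ract (lact g s) h }.

Definition left_free_set (G H : Grp) (S : Biset G H) : Prop :=
  forall (g : G) (s : S), lact g s = s -> g = gone G.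

Record Graph := {
  el :> Type;
  src : el -> el;
  bar : el -> el;
  src_src : forall x, src (src x) = src x;
  bar_bar : forall x, bar (bar x) = x;
  vert_iff : forall x, x = src x <-> x = bar x }.

Definition isV (X : Graph) (x : X) : Prop := src x = x.
Definition tgt (X : Graph) (x : X) : X := src (bar x).

Inductive reach (X : Graph) (v : X) : X -> Prop :=
  | reach0 : reach v v
  | reachS : forall e, reach v (src e) -> reach v (tgt e).

Definition connected (X : Graph) : Prop :=
  forall v w : X, isV v -> isV w -> reach v w.

Record GMor (X Y : Graph) := {
  gm :> X -> Y;
  gm_src : forall x, gm (src x) = src (gm x);
  gm_bar : forall x, gm (bar x) = bar (gm x) }.

Definition simplicial (X Y : Graph) (f : GMor X Y) : Prop :=
  forall x : X, ~ isV x -> ~ isV (f x).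

Record GoG := {
  ggraph :> Graph;
  ggrp : ggraph -> Grp;
  hsrc : forall x, Hom (ggrp x) (ggrp (src x));
  hbar : forall x, Hom (ggrp x) (ggrp (bar x));
  hbar_bar : forall x (g : ggrp x), tr ggrp (bar_bar x) (hbar (bar x) (hbar x g)) = g;
  hsrc_V : forall v (h : src v = v) (g : ggrp v), tr ggrp h (hsrc v g) = g;
  hbar_V : forall v (h : bar v = v) (g : ggrp v), tr ggrp h (hbar v g) = g;
  gconn : connected ggraph }.
Arguments ggrp : clear implicits.
Arguments hsrc : clear implicits.
Arguments hbar : clear implicits.

Definition hplus (X : GoG) (x : X) (g : ggrp X x) : ggrp X (tgt x) :=
  hsrc X (bar x) (hbar X x g).

Inductive letter (X : GoG) : Type :=
  | LG (v : X) (g : ggrp X v)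
  | LE (x : X).
Arguments LG {X} v g.
Arguments LE {X} x.

(* l is a well-formed word from v to w (composition left to right) *)
Fixpoint wf (X : GoG) (v : X) (l : list (letter X)) (w : X) : Prop :=
  match l with
  | [] => v = w /\ isV v
  | LG u _ :: l' => isV u /\ v = u /\ wf u l' w
  | LE x :: l' => v = src x /\ wf (tgt x) l' w
  end.

Inductive wbasic (X : GoG) : list (letter X) -> list (letter X) -> Prop :=
  | wb_mul : forall (v : X) (g h : ggrp X v), wbasic [LG v g; LG v h] [LG v (gmul g h)]
  | wb_one : forall (v : X), wbasic [LG v (gone (ggrp X v))] []
  | wb_vert : forall (v : X), isV v -> wbasic [LE v] []
  | wb_inv : forall (x : X), wbasic [LE x; LE (bar x)] []
  | wb_edge : forall (x : X) (g : ggrp X x),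
      wbasic [LG (src x) (hsrc X x g); LE x] [LE x; LG (tgt x) (hplus g)].

Definition wstep (X : GoG) (v w : X) (l l' : list (letter X)) : Prop :=
  exists l1 p q l2 (a b : X),
    l = l1 ++ p ++ l2 /\ l' = l1 ++ q ++ l2 /\ wbasic p q /\
    wf v l1 a /\ wf a p b /\ wf a q b /\ wf b l2 w.

Definition wequiv (X : GoG) (v w : X) : list (letter X) -> list (letter X) -> Prop :=
  clos_refl_sym_trans _ (wstep v w).

Definition lsrc (Y : GoG) (B : Graph) (f : GMor B Y) (z : B)
  (g : ggrp Y (f z)) : ggrp Y (f (src z)) :=
  tr (ggrp Y) (eq_sym (gm_src f z)) (hsrc Y (f z) g).
Definition lbar (Y : GoG) (B : Graph) (f : GMor B Y) (z : B)
  (g : ggrp Y (f z)) : ggrp Y (f (bar z)) :=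
  tr (ggrp Y) (eq_sym (gm_bar f z)) (hbar Y (f z) g).

Arguments lsrc {Y B} f z g.
Arguments lbar {Y B} f z g.
Unset Implicit Arguments.
Record GoB (Y X : GoG) := {
  bgraph :> Graph;
  lam : GMor bgraph Y;
  rho : GMor bgraph X;
  bset : forall z : bgraph, Biset (ggrp Y (lam z)) (ggrp X (rho z));
  bsrc : forall z, bset z -> bset (src z);
  bbar : forall z, bset z -> bset (bar z);
  bsrc_cong : forall z g (b : bset z) h,
      bsrc z (lact g (ract b h))
      = lact (lsrc lam z g) (ract (bsrc z b) (lsrc rho z h));
  bbar_cong : forall z g (b : bset z) h,
      bbar z (lact g (ract b h))
      = lact (lbar lam z g) (ract (bbar z b) (lbar rho z h));
  bbar_bar : forall z (b : bset z),
      tr (fun z => bcar (bset z)) (bar_bar z) (bbar (bar z) (bbar z b)) = b;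
  bsrc_V : forall z (h : src z = z) (b : bset z),
      tr (fun z => bcar (bset z)) h (bsrc z b) = b;
  bbar_V : forall z (h : bar z = z) (b : bset z),
      tr (fun z => bcar (bset z)) h (bbar z b) = b }.

Set Implicit Arguments.
Arguments lam {Y X} g : rename.
Arguments rho {Y X} g : rename.
Arguments bset {Y X} g z : rename.
Arguments bsrc {Y X} g z _ : rename.
Arguments bbar {Y X} g z _ : rename.

Section GoBdefs.
Variables (Y X : GoG) (B : GoB Y X).

Definition bplus (z : B) (b : bset B z) : bset B (tgt z) :=
  bsrc B (bar z) (bbar B z b).

(* domain of the map  \bigsqcup_{e in rho^-1(f), e^- = v} G_{lam v} (x)_{G_{lam e}} B_e -> B_v *)
Definition fib_dom (v : B) (f : X) : Type :=
  { t : { e : B & (ggrp Y (lam B v) * bset B e)%type } |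
      rho B (projT1 t) = f /\ src (projT1 t) = v }.

Definition fib_hv (v : B) (f : X) (t : fib_dom v f) : src (projT1 (proj1_sig t)) = v :=
  proj2 (proj2_sig t).

Definition fib_img (v : B) (f : X) (t : fib_dom v f)
  (k : ggrp Y (lam B (projT1 (proj1_sig t)))) : ggrp Y (lam B v) :=
  tr (fun z => gcar (ggrp Y (lam B z))) (fib_hv t) (lsrc (lam B) _ k).

Arguments fib_img {v f} t k.
Definition fib_map (v : B) (f : X) (t : fib_dom v f) : bset B v :=
  lact (fst (projT2 (proj1_sig t)))
    (tr (fun z => bcar (bset B z)) (fib_hv t) (bsrc B _ (snd (projT2 (proj1_sig t))))).

Arguments fib_map {v f} t.
(* balanced tensor relation (g k^-, b) ~ (g, k b) *)
Definition fib_tens (v : B) (f : X) (t t' : fib_dom v f) : Prop :=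
  exists k : ggrp Y (lam B (projT1 (proj1_sig t))),
    existT (fun e => (ggrp Y (lam B v) * bset B e)%type) (projT1 (proj1_sig t))
      (fst (projT2 (proj1_sig t)), lact k (snd (projT2 (proj1_sig t))))
    = existT (fun e => (ggrp Y (lam B v) * bset B e)%type) (projT1 (proj1_sig t'))
      (gmul (fst (projT2 (proj1_sig t'))) (fib_img t k), snd (projT2 (proj1_sig t'))).

Definition left_fibrant : Prop :=
  simplicial (rho B) /\
  forall (v : B) (f : X), isV v -> ~ isV f -> src f = rho B v ->
    (* the induced map on the tensor-product quotient is a bijection *)
    (forall t t' : fib_dom v f, fib_map t = fib_map t' ->
        clos_refl_sym_trans _ (@fib_tens v f) t t') /\
    (forall b : bset B v, exists t : fib_dom v f, fib_map t = b).

Definition left_free : Prop :=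
  left_fibrant /\ forall z : B, left_free_set (bset B z).

Record fbraw := FBR {
  fz : B;
  fq : list (letter Y);
  fb : bset B fz;
  fp : list (letter X) }.
Arguments FBR : clear implicits.

Variables (dag : Y) (st : X).

Definition fbvalid (e : fbraw) : Prop :=
  isV (fz e) /\ wf dag (fq e) (lam B (fz e)) /\ wf (rho B (fz e)) (fp e) st.

Inductive fbbasic : fbraw -> fbraw -> Prop :=
  | fb_wq : forall z q q' b p, wequiv dag (lam B z) q q' ->
      fbbasic (FBR z q b p) (FBR z q' b p)
  | fb_wp : forall z q b p p', wequiv (rho B z) st p p' ->
      fbbasic (FBR z q b p) (FBR z q b p')
  | fb_tl : forall z q (g : ggrp Y (lam B z)) b p,
      fbbasic (FBR z (q ++ [LG (lam B z) g]) b p) (FBR z q (lact g b) p)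
  | fb_tr : forall z q b (h : ggrp X (rho B z)) p,
      fbbasic (FBR z q (ract b h) p) (FBR z q b (LG (rho B z) h :: p))
  | fb_edge : forall (z : B) q (b : bset B z) p, ~ isV z ->
      fbbasic (FBR (src z) q (bsrc B z b) p)
              (FBR (tgt z) (q ++ [LE (lam B z)]) (bplus b) (LE (bar (rho B z)) :: p)).

Definition fbstep (e e' : fbraw) : Prop := fbvalid e /\ fbvalid e' /\ fbbasic e e'.

Definition fbequiv : fbraw -> fbraw -> Prop := clos_refl_sym_trans _ fbstep.

Definition fbact (r : list (letter Y)) (e : fbraw) : fbraw :=
  FBR (fz e) (r ++ fq e) (fb e) (fp e).

Definition fb_left_free : Prop :=
  forall r e, wf dag r dag -> fbvalid e -> fbequiv (fbact r e) e -> wequiv dag dag r [].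

Definition fbelt : Type := { e : fbraw | fbvalid e }.
Definition fb_lorbit (e e' : fbelt) : Prop :=
  exists r, wf dag r dag /\ fbequiv (fbact r (proj1_sig e)) (proj1_sig e').
Definition fb_orbits : Type := quot fb_lorbit.

Definition fib_elt : Type :=
  { zb : { z : B & bset B z } | rho B (projT1 zb) = st }.
Definition fib_lorbit (x y : fib_elt) : Prop :=
  exists g : ggrp Y (lam B (projT1 (proj1_sig x))),
    existT (fun z => bcar (bset B z)) (projT1 (proj1_sig x))
           (lact g (projT2 (proj1_sig x)))
    = proj1_sig y.
Definition fib_orbits : Type := quot fib_lorbit.

End GoBdefs.

(* Main.v *)
Require Import Defs.
From Stdlib Require Import List Relations Eqdep ProofIrrelevance FunctionalExtensionality PropExtensionality Classical ClassicalEpsilon.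
From Stdlib Require Import Program.Equality.
Import ListNotations.
Set Implicit Arguments.
Unset Strict Implicit.

Section Groups.
Variable G : Grp.
Lemma g_cancel_l (a b c : G) : gmul a b = gmul a c -> b = c.
Proof.
  intro H. rewrite <- (gmul1l b), <- (gmul1l c), <- (gmulVl a), <- !gmulA, H. reflexivity.
Qed.
Lemma g_idem (a : G) : gmul a a = a -> a = gone G.
Proof. intro H. apply g_cancel_l with a. rewrite H, gmul1r. reflexivity. Qed.
Lemma ginv_inv (a : G) : ginv (ginv a) = a.
Proof. apply g_cancel_l with (ginv a). rewrite gmulVr, gmulVl. reflexivity. Qed.
Lemma ginv_one : ginv (gone G) = gone G.
Proof. rewrite <- (gmul1l (ginv _)). apply gmulVr. Qed.
End Groups.

Lemma hom_one (G H : Grp) (f : Hom G H) : f (gone G) = gone H.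
Proof. apply g_idem. rewrite <- hmul, gmul1l. reflexivity. Qed.

Lemma tr_one (A : Type) (P : A -> Grp) x y (h : x = y) : tr (fun z => gcar (P z)) h (gone (P x)) = gone (P y).
Proof. destruct h. reflexivity. Qed.

Section GraphL.
Variable G : Graph.
Lemma tgt_vert (x : G) : isV x -> tgt x = x.
Proof. intro H. unfold tgt. assert (bar x = x) as E by (symmetry; apply vert_iff; symmetry; exact H).
  rewrite E. exact H. Qed.

Lemma tgt_bar (x : G) : tgt (bar x) = src x.
Proof. unfold tgt. rewrite bar_bar. reflexivity. Qed.

Lemma isV_src (x : G) : isV (src x).
Proof. apply src_src. Qed.
Lemma isV_tgt (x : G) : isV (tgt x).
Proof. apply src_src. Qed.

End GraphL.

Section Words.
Variable X : GoG.

Lemma wf_isV (v w : X) l : wf v l w -> isV v.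
Proof.
  destruct l as [|[u g|x] l]; simpl.
  - tauto.
  - intros [? [-> _]]; auto.
  - intros [-> _]. unfold isV. apply src_src.
Qed.

Lemma wf_isV_end (v w : X) l : wf v l w -> isV w.
Proof.
  revert v. induction l as [|[u g|x] l IH]; simpl; intros v.
  - intros [-> ?]; auto.
  - intros [_ [_ H]]; eauto.
  - intros [_ H]; eauto.
Qed.

Lemma wf_app (v w : X) l1 l2 : wf v (l1 ++ l2) w <-> exists m, wf v l1 m /\ wf m l2 w.
Proof.
  revert v. induction l1 as [|[u g|x] l IH]; simpl; intros v.
  - split.
    + intro H. exists v. split; [split; [reflexivity| eapply wf_isV; eauto]|exact H].
    + intros [m [[-> _] H]]. exact H.
  - split.
    + intros [? [? H]]. apply IH in H. destruct H as [m [? ?]]. exists m. tauto.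
    + intros [m [[? [? ?]] ?]]. split; [auto|split; [auto|]]. apply IH. eauto.
  - split.
    + intros [? H]. apply IH in H. destruct H as [m [? ?]]. exists m. tauto.
    + intros [m [[? ?] ?]]. split; [auto|]. apply IH. eauto.
Qed.

Lemma wf_app_i (v m w : X) l1 l2 : wf v l1 m -> wf m l2 w -> wf v (l1 ++ l2) w.
Proof. intros. apply wf_app. eauto. Qed.

Lemma wf_nil (v : X) : isV v -> wf v [] v.
Proof. simpl; auto. Qed.

Lemma wstep_wf (v w : X) l l' : wstep v w l l' -> wf v l w /\ wf v l' w.
Proof.
  intros (l1 & p & q & l2 & a & b & -> & -> & _ & H1 & H2 & H3 & H4).
  split; eapply wf_app_i; eauto; eapply wf_app_i; eauto.
Qed.

Lemma wstep_app_r (v m w : X) l l' r : wstep v m l l' -> wf m r w -> wstep v w (l ++ r) (l' ++ r).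
Proof.
  intros (l1 & p & q & l2 & a & b & -> & -> & Hb & H1 & H2 & H3 & H4) Hr.
  exists l1, p, q, (l2 ++ r), a, b. rewrite <- !app_assoc. repeat split; auto.
  eapply wf_app_i; eauto.
Qed.

Lemma wstep_app_l (u v w : X) l l' r : wf u r v -> wstep v w l l' -> wstep u w (r ++ l) (r ++ l').
Proof.
  intros Hr (l1 & p & q & l2 & a & b & -> & -> & Hb & H1 & H2 & H3 & H4).
  exists (r ++ l1), p, q, l2, a, b. rewrite <- !app_assoc. repeat split; auto.
  eapply wf_app_i; eauto.
Qed.

Lemma wequiv_app_r (v m w : X) l l' r : wequiv v m l l' -> wf m r w -> wequiv v w (l ++ r) (l' ++ r).
Proof.
  intros H Hr. induction H.
  - apply rst_step. eapply wstep_app_r; eauto.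
  - apply rst_refl.
  - apply rst_sym; auto.
  - eapply rst_trans; eauto.
Qed.

Lemma wequiv_app_l (u v w : X) l l' r : wf u r v -> wequiv v w l l' -> wequiv u w (r ++ l) (r ++ l').
Proof.
  intros Hr H. induction H.
  - apply rst_step. eapply wstep_app_l; eauto.
  - apply rst_refl.
  - apply rst_sym; auto.
  - eapply rst_trans; eauto.
Qed.

Lemma wequiv_app (v m w : X) l1 l1' l2 l2' : wequiv v m l1 l1' -> wequiv m w l2 l2' ->
  wf v l1' m -> wf m l2 w -> wequiv v w (l1 ++ l2) (l1' ++ l2').
Proof.
  intros H1 H2 W1 W2. eapply rst_trans.
  - eapply wequiv_app_r; eauto.
  - eapply wequiv_app_l; eauto.
Qed.

Lemma wequiv_basic (a b : X) p q : wbasic p q -> wf a p b -> wf a q b -> wequiv a b p q.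
Proof.
  intros Hb Hp Hq. apply rst_step. exists [], p, q, [], a, b.
  rewrite !app_nil_r. simpl. pose proof (wf_isV Hp). pose proof (wf_isV_end Hp).
  repeat split; auto.
Qed.

Lemma wequiv_sym (v w : X) l l' : wequiv v w l l' -> wequiv v w l' l.
Proof. apply rst_sym. Qed.
Lemma wequiv_trans (v w : X) l l' l'' : wequiv v w l l' -> wequiv v w l' l'' -> wequiv v w l l''.
Proof. apply rst_trans. Qed.
Lemma wequiv_refl (v w : X) l : wequiv v w l l.
Proof. apply rst_refl. Qed.

Lemma wequiv_mul (v : X) (g h : ggrp X v) : isV v ->
  wequiv v v [LG v g; LG v h] [LG v (gmul g h)].
Proof. intro. apply wequiv_basic. constructor. all: simpl; tauto. Qed.

Lemma wequiv_one (v : X) : isV v -> wequiv v v [LG v (gone _)] [].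
Proof. intro. apply wequiv_basic. constructor. all: simpl; tauto. Qed.

Lemma wequiv_inv (x : X) : wequiv (src x) (src x) [LE x; LE (bar x)] [].
Proof. apply wequiv_basic. constructor. all: simpl. rewrite tgt_bar.
  all: repeat split; try reflexivity; apply isV_src. Qed.

Definition linv (a : letter X) : letter X :=
  match a with LG v g => LG v (ginv g) | LE x => LE (bar x) end.
Definition winv (l : list (letter X)) := rev (map linv l).

Lemma wf_winv (v w : X) l : wf v l w -> wf w (winv l) v.
Proof.
  revert v. induction l as [|[u g|x] l IH]; intros v; simpl.
  - intros [-> ?]. simpl. auto.
  - intros [Hu [-> H]]. unfold winv in *. simpl. eapply wf_app_i. apply IH; eauto.
    simpl. auto.
  - intros [-> H]. unfold winv in *. simpl. eapply wf_app_i. apply IH; eauto.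
    simpl. split. reflexivity. split. apply tgt_bar. apply isV_src.
Qed.

Lemma wcancel (v w : X) l : wf v l w -> wequiv v v (l ++ winv l) [].
Proof.
  revert v. induction l as [|[u g|x] l IH]; intros v; simpl.
  - intros _. apply wequiv_refl.
  - intros [Hu [-> H]]. unfold winv in *. simpl.
    rewrite app_assoc.
    change (LG u g :: (l ++ rev (map linv l)) ++ [LG u (ginv g)])
      with ([LG u g] ++ (l ++ rev (map linv l)) ++ [LG u (ginv g)]).
    eapply wequiv_trans.
    { apply (wequiv_app_l (u:=u) (v:=u)). simpl; auto.
      apply (wequiv_app_r (m:=u)). 2: simpl; auto. apply IH; auto. }
    simpl. eapply wequiv_trans. apply wequiv_mul; auto. rewrite gmulVr. apply wequiv_one; auto.
  - intros [-> H]. unfold winv in *. simpl.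
    rewrite app_assoc.
    change (LE x :: (l ++ rev (map linv l)) ++ [LE (bar x)])
      with ([LE x] ++ (l ++ rev (map linv l)) ++ [LE (bar x)]).
    eapply wequiv_trans.
    { apply (wequiv_app_l (u:=src x) (v:=tgt x)). simpl. split; auto. split; auto. apply isV_tgt.
      apply (wequiv_app_r (m:=tgt x)). 2: simpl; split; auto; split; [apply tgt_bar|apply isV_src].
      apply IH; auto. }
    simpl. apply wequiv_inv.
Qed.

Lemma winv_invol l : winv (winv l) = l.
Proof.
  unfold winv. rewrite map_rev, rev_involutive, map_map.
  induction l as [|[u g|x] l IH]; simpl; rewrite ?IH, ?ginv_inv, ?bar_bar; reflexivity.
Qed.

Lemma wcancel_l (v w : X) l : wf v l w -> wequiv w w (winv l ++ l) [].
Proof.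
  intro H. pose proof (wcancel (wf_winv H)) as C. rewrite winv_invol in C. exact C.
Qed.

Lemma wequiv_cancel_r (a v w : X) w1 w2 l : wf a w1 v -> wf a w2 v -> wf v l w ->
  wequiv a w (w1 ++ l) (w2 ++ l) -> wequiv a v w1 w2.
Proof.
  intros H1 H2 Hl E.
  assert (E' : wequiv a v ((w1 ++ l) ++ winv l) ((w2 ++ l) ++ winv l)).
  { apply (wequiv_app_r (m:=w)). exact E. apply wf_winv; auto. }
  rewrite <- !app_assoc in E'.
  eapply wequiv_trans. 2: eapply wequiv_trans. 2: exact E'.
  - rewrite <- (app_nil_r w1) at 1. apply wequiv_app_l with (v:=v); auto.
    apply wequiv_sym. eapply wcancel; eauto.
  - replace w2 with (w2 ++ []) at 2 by apply app_nil_r.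
    apply wequiv_app_l with (v:=v); auto. eapply wcancel; eauto.
Qed.
End Words.


Lemma LG_tr (G : GoG) (a b : G) (H : a = b) (u : ggrp G a) :
  LG b (tr (fun z => gcar (ggrp G z)) H u) = LG a u.
Proof. destruct H. reflexivity. Qed.

Lemma LG_hsrc_tr (G : GoG) (a b : G) (H : a = b) (u : ggrp G a) :
  LG (src b) (hsrc G b (tr (fun z => gcar (ggrp G z)) H u)) = LG (src a) (hsrc G a u).
Proof. destruct H. reflexivity. Qed.

Lemma LG_hbar_tr (G : GoG) (a b : G) (H : a = b) (u : ggrp G a) :
  LG (bar b) (hbar G b (tr (fun z => gcar (ggrp G z)) H u)) = LG (bar a) (hbar G a u).
Proof. destruct H. reflexivity. Qed.

Lemma LG_inj (G : GoG) (a : G) (u u' : ggrp G a) : LG a u = LG a u' -> u = u'.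
Proof. intro H. injection H. intro H'. apply inj_pair2 in H'. exact H'. Qed.

Lemma gm_tgt (A C : Graph) (f : GMor A C) (x : A) : f (tgt x) = tgt (f x).
Proof. unfold tgt. rewrite gm_src, gm_bar. reflexivity. Qed.

Lemma gm_isV (A C : Graph) (f : GMor A C) (x : A) : isV x -> isV (f x).
Proof. unfold isV. intro H. rewrite <- gm_src, H. reflexivity. Qed.

Section Push.
Variables (Y X : GoG) (B : GoB Y X) (dag : Y).

Notation BS z := (bcar (bset B z)).
Notation trB := (tr (fun z => bcar (bset B z))).

Lemma lsrc_one (z : B) : lsrc (rho B) z (gone _) = gone _.
Proof. unfold lsrc. rewrite hom_one. apply tr_one. Qed.
Lemma lbar_one (z : B) : lbar (rho B) z (gone _) = gone _.
Proof. unfold lbar. rewrite hom_one. apply tr_one. Qed.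
Lemma lsrc_oneY (z : B) : lsrc (lam B) z (gone _) = gone _.
Proof. unfold lsrc. rewrite hom_one. apply tr_one. Qed.
Lemma lbar_oneY (z : B) : lbar (lam B) z (gone _) = gone _.
Proof. unfold lbar. rewrite hom_one. apply tr_one. Qed.

Lemma bsrc_lact (z : B) g (b : BS z) : bsrc B z (lact g b) = lact (lsrc (lam B) z g) (bsrc B z b).
Proof. rewrite <- (ract1 b) at 1. rewrite bsrc_cong, lsrc_one, ract1. reflexivity. Qed.
Lemma bbar_lact (z : B) g (b : BS z) : bbar B z (lact g b) = lact (lbar (lam B) z g) (bbar B z b).
Proof. rewrite <- (ract1 b) at 1. rewrite bbar_cong, lbar_one, ract1. reflexivity. Qed.
Lemma bsrc_ract (z : B) h (b : BS z) : bsrc B z (ract b h) = ract (bsrc B z b) (lsrc (rho B) z h).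
Proof. rewrite <- (lact1 b) at 1. rewrite <- lract, bsrc_cong, lsrc_oneY, lact1. reflexivity. Qed.
Lemma bbar_ract (z : B) h (b : BS z) : bbar B z (ract b h) = ract (bbar B z b) (lbar (rho B) z h).
Proof. rewrite <- (lact1 b) at 1. rewrite <- lract, bbar_cong, lbar_oneY, lact1. reflexivity. Qed.

Lemma bplus_lact (z : B) g (b : BS z) :
  bplus (lact g b) = lact (lsrc (lam B) (bar z) (lbar (lam B) z g)) (bplus b).
Proof. unfold bplus. rewrite bbar_lact, bsrc_lact. reflexivity. Qed.
Lemma bplus_ract (z : B) h (b : BS z) :
  bplus (ract b h) = ract (bplus b) (lsrc (rho B) (bar z) (lbar (rho B) z h)).
Proof. unfold bplus. rewrite bbar_ract, bsrc_ract. reflexivity. Qed.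

Lemma LG_lsrc (z : B) (k : ggrp Y (lam B z)) :
  LG (lam B (src z)) (lsrc (lam B) z k) = LG (src (lam B z)) (hsrc Y (lam B z) k).
Proof. unfold lsrc. apply LG_tr. Qed.
Lemma LG_lplus (z : B) (k : ggrp Y (lam B z)) :
  LG (lam B (tgt z)) (lsrc (lam B) (bar z) (lbar (lam B) z k)) = LG (tgt (lam B z)) (hplus k).
Proof. unfold lsrc, lbar, tgt. rewrite LG_tr. rewrite LG_hsrc_tr. reflexivity. Qed.
Lemma LG_lsrcX (z : B) (k : ggrp X (rho B z)) :
  LG (rho B (src z)) (lsrc (rho B) z k) = LG (src (rho B z)) (hsrc X (rho B z) k).
Proof. unfold lsrc. apply LG_tr. Qed.
Lemma LG_lplusX (z : B) (k : ggrp X (rho B z)) :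
  LG (rho B (tgt z)) (lsrc (rho B) (bar z) (lbar (rho B) z k)) = LG (tgt (rho B z)) (hplus k).
Proof. unfold lsrc, lbar, tgt. rewrite LG_tr. rewrite LG_hsrc_tr. reflexivity. Qed.

Unset Implicit Arguments.
Inductive Rt : forall z : B, list (letter Y) -> BS z -> forall z' : B, list (letter Y) -> BS z' -> Prop :=
| Rt_i : forall z w (b : BS z) w' (b' : BS z) (k : ggrp Y (lam B z)),
    wf dag w (lam B z) -> wf dag w' (lam B z) ->
    wequiv dag (lam B z) w' (w ++ [LG (lam B z) k]) -> b = lact k b' -> Rt z w b z w' b'.
Set Implicit Arguments.

Lemma wequiv_k1 (v : Y) w (a : Y) : wf v w a -> wequiv v a w (w ++ [LG a (gone _)]).
Proof.
  intro H. pose proof (wf_isV_end H) as Ha.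
  apply wequiv_sym. rewrite <- (app_nil_r w) at 2. apply wequiv_app_l with (v:=a); auto.
  apply wequiv_one; auto.
Qed.

Lemma Rt_word z w w' (b : BS z) : wf dag w (lam B z) -> wf dag w' (lam B z) ->
  wequiv dag (lam B z) w w' -> Rt z w b z w' b.
Proof.
  intros H1 H2 E. apply Rt_i with (gone _); auto.
  - eapply wequiv_trans. apply wequiv_sym, E. apply wequiv_k1; auto.
  - rewrite lact1. reflexivity.
Qed.

Lemma Rt_refl z w (b : BS z) : wf dag w (lam B z) -> Rt z w b z w b.
Proof. intro. apply Rt_word; auto. apply wequiv_refl. Qed.

Lemma Rt_act z w (b : BS z) (k : ggrp Y (lam B z)) : wf dag w (lam B z) ->
  Rt z w (lact k b) z (w ++ [LG (lam B z) k]) b.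
Proof.
  intro H. apply Rt_i with k; auto.
  - eapply wf_app_i; eauto. simpl. pose proof (wf_isV_end H). auto.
  - apply wequiv_refl.
Qed.

Lemma Rt_wf z w (b : BS z) z' w' (b' : BS z') : Rt z w b z' w' b' ->
  wf dag w (lam B z) /\ wf dag w' (lam B z').
Proof. intro H; destruct H; auto. Qed.

Lemma Rt_eq z w (b : BS z) z' w' (b' : BS z') : Rt z w b z' w' b' -> z = z'.
Proof. intro H; destruct H; auto. Qed.

Lemma Rt_sym z w (b : BS z) z' w' (b' : BS z') : Rt z w b z' w' b' -> Rt z' w' b' z w b.
Proof.
  intro H. destruct H as [z w b w' b' k H1 H2 E Hb].
  pose proof (wf_isV_end H1) as Hv.
  apply Rt_i with (ginv k); auto.
  - eapply wequiv_trans.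
    2:{ apply wequiv_app_r with (m:=lam B z). apply wequiv_sym, E.
        simpl; auto. }
    rewrite <- app_assoc. simpl.
    eapply wequiv_trans. apply wequiv_k1. exact H1.
    apply wequiv_app_l with (v:=lam B z); auto.
    eapply wequiv_trans. 2: apply wequiv_sym, wequiv_mul; auto.
    rewrite gmulVr. apply wequiv_refl.
  - rewrite Hb, <- lactM, gmulVl, lact1. reflexivity.
Qed.

Lemma Rt_trans z1 w1 (b1 : BS z1) z2 w2 (b2 : BS z2) z3 w3 (b3 : BS z3) :
  Rt z1 w1 b1 z2 w2 b2 -> Rt z2 w2 b2 z3 w3 b3 -> Rt z1 w1 b1 z3 w3 b3.
Proof.
  intros H H'. destruct H as [z w b w' b' k H1 H2 E Hb].
  destruct H' as [z w'' b'' w3 b3 k' H1' H2' E' Hb'].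
  pose proof (wf_isV_end H1) as Hv.
  apply Rt_i with (gmul k k'); auto.
  - eapply wequiv_trans. exact E'.
    eapply wequiv_trans. apply wequiv_app_r with (m:=lam B z). exact E. simpl; auto.
    rewrite <- app_assoc. apply wequiv_app_l with (v:=lam B z); auto.
    apply wequiv_mul; auto.
  - rewrite Hb, Hb', lactM. reflexivity.
Qed.

Lemma Rt_tr z1 z2 (H : z1 = z2) w (b : BS z1) : wf dag w (lam B z1) -> Rt z1 w b z2 w (trB H b).
Proof. destruct H. apply Rt_refl. Qed.


Unset Implicit Arguments.
Inductive Push : forall z : B, BS z -> list (letter X) -> list (letter Y) -> forall z' : B, BS z' -> Prop :=
| P_nil : forall z (b : BS z), Push z b [] [] z b
| P_g : forall z (b : BS z) (h : ggrp X (rho B z)) p s z' (b' : BS z'),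
    Push z (ract b h) p s z' b' -> Push z b (LG (rho B z) h :: p) s z' b'
| P_v : forall z (b : BS z) p s z' (b' : BS z'), isV (rho B z) ->
    Push z b p s z' b' -> Push z b (LE (rho B z) :: p) s z' b'
| P_e : forall (e : B) (be : BS e) (g : ggrp Y (lam B (src e))) p s z' (b' : BS z'),
    ~ isV (rho B e) -> Push (tgt e) (bplus be) p s z' b' ->
    Push (src e) (lact g (bsrc B e be)) (LE (rho B e) :: p)
         (LG (lam B (src e)) g :: LE (lam B e) :: s) z' b'.
Set Implicit Arguments.

Lemma Push_wf z (b : BS z) p s z' (b' : BS z') : Push z b p s z' b' -> isV z ->
  wf (lam B z) s (lam B z') /\ isV z'.
Proof.
  intro H. induction H; intro Hz.
  - simpl. split; auto. split; auto. apply gm_isV; auto.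
  - auto.
  - auto.
  - destruct (IHPush (isV_tgt (G:=B) e)) as [IH1 IH2].
    simpl. split; auto. repeat split.
    + apply gm_isV, isV_src.
    + apply gm_src.
    + rewrite <- gm_tgt. exact IH1.
Qed.

Lemma Push_end z (b : BS z) p s z' (b' : BS z') : Push z b p s z' b' ->
  forall w, wf (rho B z) p w -> rho B z' = w.
Proof.
  intro H. induction H; intros w Hw; simpl in Hw.
  - tauto.
  - apply IHPush. tauto.
  - apply IHPush. destruct Hw as [_ Hw]. rewrite tgt_vert in Hw; auto.
  - apply IHPush. rewrite gm_tgt. tauto.
Qed.

Lemma Push_tr z1 z2 (E : z1 = z2) (b : BS z1) p s z' (b' : BS z') :
  Push z1 b p s z' b' -> Push z2 (trB E b) p s z' b'.
Proof. destruct E. auto. Qed.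

Lemma Push_app z (b : BS z) l s z' (b' : BS z') : Push z b l s z' b' ->
  forall l1 l2, l = l1 ++ l2 ->
  exists s1 zm (bm : BS zm) s2, Push z b l1 s1 zm bm /\ Push zm bm l2 s2 z' b' /\ s = s1 ++ s2.
Proof.
  intro H. induction H; intros l1 l2 El.
  - destruct l1; [|discriminate]. destruct l2; [|discriminate].
    exists [], z, b, []. repeat split; constructor.
  - destruct l1 as [|a l1].
    + exists [], z, b, s. split. constructor. split; auto. simpl in El. subst l2. constructor; auto.
    + simpl in El. injection El as Ea E2; subst a. destruct (IHPush _ _ E2) as (s1 & zm & bm & s2 & H1 & H2 & ->).
      exists s1, zm, bm, s2. split; auto. constructor; auto.
  - destruct l1 as [|a l1].
    + exists [], z, b, s. split. constructor. split; auto. simpl in El. subst l2. constructor; auto.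
    + simpl in El. injection El as Ea E2; subst a. destruct (IHPush _ _ E2) as (s1 & zm & bm & s2 & H1 & H2 & ->).
      exists s1, zm, bm, s2. split; auto. constructor; auto.
  - destruct l1 as [|a l1].
    + eexists [], _, _, _. split. constructor. split; [|reflexivity]. simpl in El. subst l2. constructor; auto.
    + simpl in El. injection El as Ea E2; subst a. destruct (IHPush _ _ E2) as (s1 & zm & bm & s2 & H1 & H2 & ->).
      eexists _, zm, bm, s2. split. constructor; eauto. split; auto.
Qed.

Lemma Push_comp z (b : BS z) l1 s1 zm (bm : BS zm) l2 s2 z' (b' : BS z') :
  Push z b l1 s1 zm bm -> Push zm bm l2 s2 z' b' -> Push z b (l1 ++ l2) (s1 ++ s2) z' b'.
Proof.
  intro H. induction H; intro H'; simpl; try constructor; auto.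
Qed.

End Push.
Arguments Push {Y X B} z b p s z' b'.
Arguments Rt {Y X B} dag z w b z' w' b'.


Section Main.
Variables (Y X : GoG) (B : GoB Y X) (dag : Y) (st : X).
Hypothesis HF : left_fibrant B.

Notation BS z := (bcar (bset B z)).
Notation trB := (tr (fun z => bcar (bset B z))).
Notation mk z q b p := (@FBR Y X B z q b p).

Lemma notV_e (e : B) : ~ isV (rho B e) -> ~ isV e.
Proof. intros H H'. apply H, gm_isV, H'. Qed.

Lemma Push_ex p : forall z (b : BS z) w, isV z -> wf (rho B z) p w ->
  exists s z' (b' : BS z'), Push z b p s z' b'.
Proof.
  induction p as [|[u h|x] p IH]; intros z b w Hz Hw; simpl in Hw.
  - eexists _, _, _. constructor.
  - destruct Hw as [Hu [Eu Hw]]. subst u.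
    destruct (IH z (ract b h) w Hz Hw) as (s & z' & b' & H).
    eexists _, _, _. constructor. eauto.
  - destruct Hw as [Ex Hw]. destruct (classic (isV x)) as [Hx|Hx].
    + assert (x = rho B z) as ->. { rewrite Ex. symmetry. exact Hx. }
      rewrite tgt_vert in Hw by auto.
      destruct (IH z b w Hz Hw) as (s & z' & b' & H).
      eexists _, _, _. apply P_v; eauto.
    + destruct HF as [_ HF2]. destruct (HF2 z x Hz Hx (eq_sym Ex)) as [_ Hs].
      destruct (Hs b) as [[[e [g be]] [Hr Hsrc]] Hm].
      simpl in Hr, Hsrc. subst x. subst z. subst b. unfold fib_map, fib_hv; cbn. match goal with |- context [tr _ ?E _] => rewrite (UIP_refl _ _ E) end; simpl.
      rewrite <- gm_tgt in Hw.
      destruct (IH (tgt e) (bplus be) w (isV_tgt e) Hw) as (s & z' & b' & H).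
      eexists _, _, _. apply P_e; eauto.
Qed.

Lemma fbs (e e' : fbraw B) : fbvalid dag st e -> fbvalid dag st e' -> fbbasic dag st e e' -> fbequiv dag st e e'.
Proof. intros. apply rst_step. split; auto. Qed.

Lemma Push_equiv z (b : BS z) p s z' (b' : BS z') : Push z b p s z' b' ->
  forall q, fbvalid dag st (mk z q b p) -> fbequiv dag st (mk z q b p) (mk z' (q ++ s) b' []).
Proof.
  intro H. induction H; intros q Hv; destruct Hv as (Hz & Hq & Hp); simpl in Hz, Hq, Hp.
  - rewrite app_nil_r. apply rst_refl.
  - destruct Hp as (Hr & _ & Hp).
    eapply rst_trans. 2: apply IHPush; split; auto.
    apply rst_sym. apply fbs. 3: apply fb_tr. all: repeat split; simpl; auto.
  - destruct Hp as (Ez & Hp). rewrite tgt_vert in Hp by auto.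
    eapply rst_trans. 2: apply IHPush; split; auto.
    apply fbs. 3:{ apply fb_wp. change (LE (rho B z) :: p) with ([LE (rho B z)] ++ p).
    rewrite <- (app_nil_l p) at 2. apply wequiv_app_r with (m:=rho B z); auto.
    apply wequiv_basic. constructor; auto. simpl. rewrite tgt_vert; auto. simpl; auto. }
    all: repeat split; simpl; auto. rewrite tgt_vert; auto.
  - destruct Hp as (Ez & Hp).
    assert (Hl : isV (lam B (src e))) by apply gm_isV, isV_src.
    assert (Hq' : wf dag (q ++ [LG (lam B (src e)) g]) (lam B (src e))).
    { eapply wf_app_i; eauto. simpl; auto. }
    assert (Hq'' : wf dag ((q ++ [LG (lam B (src e)) g]) ++ [LE (lam B e)]) (lam B (tgt e))).
    { eapply wf_app_i; eauto. simpl. split. apply gm_src. split. symmetry; apply gm_tgt.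
      apply isV_tgt. }
    assert (Hp' : wf (rho B (tgt e)) p st) by (rewrite gm_tgt; auto).
    assert (HP : wf (rho B (src e)) (LE (rho B e) :: p) st) by (simpl; auto).
    assert (HP2 : wf (rho B (tgt e)) (LE (bar (rho B e)) :: LE (rho B e) :: p) st).
    { simpl. split. rewrite gm_tgt. reflexivity. rewrite tgt_bar. auto. }
    eapply rst_trans.
    { apply rst_sym, fbs. 3: apply fb_tl. all: repeat split; simpl; auto using isV_src. }
    eapply rst_trans.
    { apply fbs. 3: apply fb_edge. 3: apply notV_e; auto. all: try exact Hq''; try exact HP2; repeat split; simpl; auto using isV_src, isV_tgt; try (rewrite gm_tgt; reflexivity); apply tgt_bar. }
    eapply rst_trans.
    { apply fbs. 3: apply fb_wp with (p' := p). 3:{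
        change (LE (bar (rho B e)) :: LE (rho B e) :: p) with ([LE (bar (rho B e)); LE (rho B e)] ++ p).
        rewrite <- (app_nil_l p) at 2. apply wequiv_app_r with (m:=tgt (rho B e)); auto.
        rewrite gm_tgt. unfold tgt.
        pose proof (wequiv_inv (bar (rho B e))) as W. rewrite bar_bar in W. exact W. }
      all: repeat split; simpl; auto using isV_src, isV_tgt; try (rewrite gm_tgt; reflexivity); apply tgt_bar. }
    replace (q ++ LG (lam B (src e)) g :: LE (lam B e) :: s) with (((q ++ [LG (lam B (src e)) g]) ++ [LE (lam B e)]) ++ s)
      by (rewrite <- !app_assoc; reflexivity).
    apply IHPush. repeat split; auto; apply isV_tgt.
Qed.


Lemma Push_inv_nil z (b : BS z) s z' (b' : BS z') : Push z b [] s z' b' ->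
  s = [] /\ exists H : z = z', trB H b = b'.
Proof.
  intro H. remember [] as l. destruct H; try discriminate. split; auto. exists eq_refl. reflexivity.
Qed.

Lemma Push_inv_LG z (b : BS z) u (h : ggrp X u) p s z' (b' : BS z') :
  Push z b (LG u h :: p) s z' b' ->
  exists h' : ggrp X (rho B z), LG u h = LG (rho B z) h' /\ Push z (ract b h') p s z' b'.
Proof.
  intro H. remember (LG u h :: p) as l. destruct H; try discriminate.
  pose proof Heql as E0. injection Heql as E1 E2. subst p0. exists h0. split; [congruence | auto].
Qed.

Lemma Push_inv_LE z (b : BS z) x p s z' (b' : BS z') :
  Push z b (LE x :: p) s z' b' ->
  (x = rho B z /\ isV (rho B z) /\ Push z b p s z' b') \/
  (exists e (Hs : src e = z) (be : BS e) (g : ggrp Y (lam B (src e))) s0,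
     rho B e = x /\ ~ isV (rho B e) /\ b = trB Hs (lact g (bsrc B e be)) /\
     s = LG (lam B (src e)) g :: LE (lam B e) :: s0 /\ Push (tgt e) (bplus be) p s0 z' b').
Proof.
  intro H. remember (LE x :: p) as l. destruct H; try discriminate.
  - injection Heql as E1 E2. subst. left. auto.
  - injection Heql as E1 E2. subst. right. exists e, eq_refl, be, g, s. auto.
Qed.

Lemma Rt_ract z W (b : BS z) W2 (b2 : BS z) (h : ggrp X (rho B z)) :
  Rt dag z W b z W2 b2 -> Rt dag z W (ract b h) z W2 (ract b2 h).
Proof.
  intro H. dependent destruction H.
  apply Rt_i with k; auto. rewrite lract. reflexivity.
Qed.

Lemma wequiv_edgeY (e : B) (k : ggrp Y (lam B e)) :
  wequiv (lam B (src e)) (lam B (tgt e))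
    [LG (lam B (src e)) (lsrc (lam B) e k); LE (lam B e)]
    [LE (lam B e); LG (lam B (tgt e)) (lsrc (lam B) (bar e) (lbar (lam B) e k))].
Proof.
  rewrite LG_lsrc, LG_lplus. rewrite gm_src, gm_tgt.
  apply wequiv_basic. constructor.
  - simpl. repeat split; auto using isV_src, isV_tgt.
  - simpl. repeat split; auto using isV_src, isV_tgt.
Qed.

Lemma tens_step (e : B) (g : ggrp Y (lam B (src e))) (k : ggrp Y (lam B e)) (be : BS e) W :
  wf dag W (lam B (src e)) ->
  Rt dag (tgt e) (W ++ [LG (lam B (src e)) g; LE (lam B e)]) (bplus (lact k be))
         (tgt e) (W ++ [LG (lam B (src e)) (gmul g (lsrc (lam B) e k)); LE (lam B e)]) (bplus be).
Proof.
  intro HW.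
  assert (Hl : isV (lam B (src e))) by apply gm_isV, isV_src.
  assert (Hw : forall g', wf dag (W ++ [LG (lam B (src e)) g'; LE (lam B e)]) (lam B (tgt e))).
  { intro g'. eapply wf_app_i; eauto. simpl. repeat split; auto. apply gm_src. symmetry; apply gm_tgt.
    apply isV_tgt. }
  apply Rt_i with (lsrc (lam B) (bar e) (lbar (lam B) e k)); auto.
  - rewrite <- app_assoc. apply wequiv_app_l with (v := lam B (src e)); auto. simpl.
    eapply wequiv_trans.
    { change [LG (lam B (src e)) (gmul g (lsrc (lam B) e k)); LE (lam B e)]
        with ([LG (lam B (src e)) (gmul g (lsrc (lam B) e k))] ++ [LE (lam B e)]).
      apply wequiv_app_r with (m := lam B (src e)).
      apply wequiv_sym, wequiv_mul; auto.
      simpl. repeat split. apply gm_src. symmetry; apply gm_tgt. apply isV_tgt. }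
    simpl. eapply (wequiv_app_l (r:=[LG (lam B (src e)) g]) (l:=[_;_]) (l':=[_;_])). simpl; auto.
    apply wequiv_edgeY.
  - apply bplus_lact.
Qed.

Definition fe v f (t : fib_dom (B:=B) v f) : B := projT1 (proj1_sig t).
Definition fg v f (t : fib_dom (B:=B) v f) : ggrp Y (lam B v) := fst (projT2 (proj1_sig t)).
Definition fbb v f (t : fib_dom (B:=B) v f) : BS (fe t) := snd (projT2 (proj1_sig t)).

Lemma fe_src v f (t : fib_dom (B:=B) v f) : src (fe t) = v.
Proof. exact (proj2 (proj2_sig t)). Qed.

Lemma tens_e v f (t t' : fib_dom (B:=B) v f) : clos_refl_sym_trans _ (@fib_tens _ _ B v f) t t' -> fe t = fe t'.
Proof.
  intro H. induction H; auto.
  - destruct H as [k Hk]. apply (f_equal (@projT1 _ _)) in Hk. exact Hk.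
  - congruence.
Qed.

Lemma tens_single v f (t t' : fib_dom (B:=B) v f) W : fib_tens t t' -> wf dag W (lam B v) ->
  Rt dag (tgt (fe t)) (W ++ [LG (lam B v) (fg t); LE (lam B (fe t))]) (bplus (fbb t))
         (tgt (fe t')) (W ++ [LG (lam B v) (fg t'); LE (lam B (fe t'))]) (bplus (fbb t')).
Proof.
  destruct t as [[e [g b]] [Hr Hs]], t' as [[e' [g' b']] [Hr' Hs']].
  unfold fib_tens, fe, fg, fbb, fib_img, fib_hv. simpl in *. intros [k Hk] HW.
  pose proof (f_equal (@projT1 _ _) Hk) as Ee. simpl in Ee. subst e'.
  apply inj_pair2 in Hk. injection Hk as E1 E2. subst v. simpl in *.
  rewrite (UIP_refl _ _ (proj2 _)) in E1. simpl in E1. subst g b'.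
  apply Rt_sym. apply tens_step. auto.
Qed.

Lemma tens_chain v f (t t' : fib_dom (B:=B) v f) W :
  clos_refl_sym_trans _ (@fib_tens _ _ B v f) t t' -> wf dag W (lam B v) ->
  Rt dag (tgt (fe t)) (W ++ [LG (lam B v) (fg t); LE (lam B (fe t))]) (bplus (fbb t))
         (tgt (fe t')) (W ++ [LG (lam B v) (fg t'); LE (lam B (fe t'))]) (bplus (fbb t')).
Proof.
  intros H HW. induction H.
  - apply tens_single; auto.
  - apply Rt_refl. eapply wf_app_i; eauto. simpl. pose proof (fe_src x) as Hs.
    repeat split. apply (wf_isV_end HW). rewrite <- gm_src, Hs. reflexivity. symmetry; apply gm_tgt.
    apply isV_tgt.
  - apply Rt_sym; auto.
  - eapply Rt_trans; eauto.
Qed.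


Lemma Rt_inv z W (b : BS z) W2 (b2 : BS z) : Rt dag z W b z W2 b2 ->
  exists k, wf dag W (lam B z) /\ wf dag W2 (lam B z) /\
    wequiv dag (lam B z) W2 (W ++ [LG (lam B z) k]) /\ b = lact k b2.
Proof. intro H. dependent destruction H. exists k. auto. Qed.

Notation trG := (tr (fun z => gcar (ggrp Y (lam B z)))).

Lemma trB_lact z1 z2 (H : z1 = z2) g (c : BS z1) : trB H (lact g c) = lact (trG H g) (trB H c).
Proof. destruct H. reflexivity. Qed.

Definition mkfd v f (e : B) (g : ggrp Y (lam B v)) (be : BS e) (Hr : rho B e = f) (Hs : src e = v)
  : fib_dom (B:=B) v f :=
  exist _ (existT (fun e0 => (ggrp Y (lam B v) * BS e0)%type) e (g, be)) (conj Hr Hs).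

Lemma fib_map_mkfd v f (e : B) (g : ggrp Y (lam B v)) (be : BS e) (Hr : rho B e = f) (Hs : src e = v) :
  fib_map (mkfd g be Hr Hs) = lact g (trB Hs (bsrc B e be)).
Proof.
  unfold fib_map, fib_hv, mkfd. simpl. rewrite (proof_irrelevance _ (proj2 _) Hs). reflexivity.
Qed.

Lemma no_mix (e : B) : rho B e = rho B (src e) -> ~ isV (rho B e) -> False.
Proof. intros E H. apply H. unfold isV. rewrite <- gm_src. symmetry. exact E. Qed.

Lemma push_cong p : forall z (b : BS z) s z' (b' : BS z') (b2 : BS z) s2 z2 (b2' : BS z2) W W2,
  Push z b p s z' b' -> Push z b2 p s2 z2 b2' -> Rt dag z W b z W2 b2 ->
  Rt dag z' (W ++ s) b' z2 (W2 ++ s2) b2'.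
Proof.
  induction p as [|[u h|x] p IH]; intros z b s z' b' b2 s2 z2 b2' W W2 H1 H2 HR.
  - apply Push_inv_nil in H1, H2. destruct H1 as [-> [E1 Eb1]]. destruct H2 as [-> [E2 Eb2]].
    subst z' z2. simpl in Eb1, Eb2. subst. rewrite !app_nil_r. exact HR.
  - apply Push_inv_LG in H1, H2. destruct H1 as (h1 & Eh1 & H1). destruct H2 as (h2 & Eh2 & H2).
    rewrite Eh1 in Eh2. apply LG_inj in Eh2. subst h2.
    eapply IH; eauto. apply Rt_ract; auto.
  - apply Push_inv_LE in H1, H2.
    destruct H1 as [(Ex & Hv & H1) | (e1 & Hs1 & be1 & g1 & s0 & Hr1 & Hn1 & Hb1 & Es1 & H1)];
    destruct H2 as [(Ex' & Hv' & H2) | (e2 & Hs2 & be2 & g2 & s02 & Hr2 & Hn2 & Hb2 & Es2 & H2)].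
    + eapply IH; eauto.
    + exfalso. apply (no_mix (e:=e2)); [congruence | auto].
    + exfalso. apply (no_mix (e:=e1)); [congruence | auto].
    + subst z x s s2. simpl in Hb1. subst b.
      destruct (Rt_inv HR) as (k & HW & HW2 & EW & Eb).
      destruct HF as [_ HF2].
      destruct (HF2 (src e1) (rho B e1) (isV_src e1) Hn1 (eq_sym (gm_src _ e1))) as [Hu _].
      pose (t1 := mkfd (f:=rho B e1) g1 be1 eq_refl eq_refl).
      pose (t2 := mkfd (gmul k (trG Hs2 g2)) be2 Hr2 Hs2).
      assert (Em : fib_map t1 = fib_map t2).
      { unfold t1, t2. rewrite !fib_map_mkfd. simpl. rewrite Eb, Hb2, trB_lact, lactM. reflexivity. }
      pose proof (Hu t1 t2 Em) as Ch.
      pose proof (tens_e Ch) as Ee. unfold t1, t2, fe, mkfd in Ee. simpl in Ee. subst e2.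
      pose proof (tens_chain (W:=W) Ch HW) as HC. unfold t1, t2, fe, fg, fbb, mkfd in HC. simpl in HC.
      clear Em Ch t1 t2. rewrite (UIP_refl _ _ Hs2) in HC. simpl in HC.
      replace (W ++ LG (lam B (src e1)) g1 :: LE (lam B e1) :: s0)
        with ((W ++ [LG (lam B (src e1)) g1; LE (lam B e1)]) ++ s0) by (rewrite <- app_assoc; reflexivity).
      replace (W2 ++ LG (lam B (src e1)) g2 :: LE (lam B e1) :: s02)
        with ((W2 ++ [LG (lam B (src e1)) g2; LE (lam B e1)]) ++ s02) by (rewrite <- app_assoc; reflexivity).
      eapply IH; eauto.
      eapply Rt_trans. exact HC.
      assert (Hl : isV (lam B (src e1))) by apply gm_isV, isV_src.
      assert (Hw : forall W0 g', wf dag W0 (lam B (src e1)) ->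
                 wf dag (W0 ++ [LG (lam B (src e1)) g'; LE (lam B e1)]) (lam B (tgt e1))).
      { intros W0 g' H0. eapply wf_app_i; eauto. simpl. repeat split; auto. apply gm_src.
        symmetry; apply gm_tgt. apply isV_tgt. }
      apply Rt_word; auto.
      apply wequiv_sym. eapply wequiv_trans.
      { apply wequiv_app_r with (m := lam B (src e1)). exact EW.
        simpl. repeat split; auto. apply gm_src. symmetry; apply gm_tgt. apply isV_tgt. }
      rewrite <- app_assoc. apply wequiv_app_l with (v := lam B (src e1)); auto.
      simpl. eapply (wequiv_app_r (l:=[_;_]) (l':=[_]) (r:=[LE (lam B e1)])).
      apply wequiv_mul; auto.
      simpl. repeat split; auto. apply gm_src. symmetry; apply gm_tgt. apply isV_tgt.
Qed.


Lemma isV_bar (G : Graph) (y : G) : isV (bar y) -> isV y.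
Proof.
  unfold isV. intro H. apply eq_sym, vert_iff. symmetry in H. apply vert_iff in H.
  rewrite bar_bar in H. rewrite H at 1. reflexivity.
Qed.

Lemma trB_bsrc (y1 y2 : B) (H : y1 = y2) (c : BS y1) (E : src y1 = src y2) :
  trB E (bsrc B y1 c) = bsrc B y2 (trB H c).
Proof. destruct H. rewrite (UIP_refl _ _ E). reflexivity. Qed.

Lemma trB_plus_back (z : B) (b : BS z) (E : tgt (bar z) = src z) :
  trB E (bplus (bbar B z b)) = bsrc B z b.
Proof. unfold bplus. rewrite (trB_bsrc (bar_bar z)). rewrite bbar_bar. reflexivity. Qed.

Lemma back (z : B) (b : BS z) p s z' (b' : BS z') W : ~ isV (rho B z) -> wf dag W (lam B (src z)) ->
  Push (tgt z) (bplus b) (LE (bar (rho B z)) :: p) s z' b' ->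
  exists W0 s0 (b0 : BS (src z)), Push (src z) b0 p s0 z' b' /\
    Rt dag (src z) W (bsrc B z b) (src z) W0 b0 /\ W ++ LE (lam B z) :: s = W0 ++ s0.
Proof.
  intros Hn HW HP. apply Push_inv_LE in HP.
  destruct HP as [(Ex & Hv & _) | (e2 & Hs2 & be2 & g2 & s02 & Hr2 & Hn2 & Hb2 & Es & H2)].
  - exfalso. apply Hn, isV_bar. rewrite Ex. exact Hv.
  - destruct HF as [_ HF2].
    assert (Hnb : ~ isV (bar (rho B z))) by (intro H; apply Hn, isV_bar, H).
    destruct (HF2 (tgt z) (bar (rho B z)) (isV_tgt z) Hnb (eq_sym (gm_tgt _ z))) as [Hu _].
    pose (t0 := mkfd (v:=tgt z) (gone _) (bbar B z b) (gm_bar (rho B) z) eq_refl).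
    pose (t2 := mkfd (trG Hs2 g2) be2 Hr2 Hs2).
    assert (Em : fib_map t0 = fib_map t2).
    { unfold t0, t2. rewrite !fib_map_mkfd. simpl. rewrite lact1, <- trB_lact, <- Hb2. reflexivity. }
    pose proof (Hu t0 t2 Em) as Ch.
    pose proof (tens_e Ch) as Ee. unfold t0, t2, fe, mkfd in Ee. simpl in Ee. subst e2.
    assert (HW' : wf dag (W ++ [LE (lam B z)]) (lam B (tgt z))).
    { eapply wf_app_i; eauto. simpl. repeat split. apply gm_src. symmetry; apply gm_tgt. apply isV_tgt. }
    pose proof (tens_chain (W:=W ++ [LE (lam B z)]) Ch HW') as HC.
    unfold t0, t2, fe, fg, fbb, mkfd in HC. simpl in HC.
    clear Em Ch t0 t2. rewrite (UIP_refl _ _ Hs2) in HC. simpl in HC.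
    assert (E : tgt (bar z) = src z) by apply tgt_bar.
    subst s.
    exists (W ++ [LE (lam B z); LG (lam B (src (bar z))) g2; LE (lam B (bar z))]), s02, (trB E (bplus be2)).
    split; [|split].
    + apply Push_tr. exact H2.
    + assert (Hwl : forall g', wf dag (W ++ [LE (lam B z); LG (lam B (tgt z)) g'; LE (lam B (bar z))]) (lam B (src z))).
      { intro g'. eapply wf_app_i; eauto. simpl. repeat split.
        apply gm_src. apply gm_isV, isV_tgt. symmetry; apply gm_tgt. apply (gm_src (lam B) (bar z)).
        rewrite <- gm_tgt, tgt_bar. reflexivity. apply isV_tgt. }
      eapply Rt_trans.
      { apply Rt_word. exact HW. apply (Hwl (gone _)).
        apply wequiv_sym. replace W with (W ++ []) at 2 by apply app_nil_r. apply wequiv_app_l with (v := lam B (src z)); auto.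
        change [LE (lam B z); LG (lam B (tgt z)) (gone _); LE (lam B (bar z))]
          with ([LE (lam B z)] ++ [LG (lam B (tgt z)) (gone _)] ++ [LE (lam B (bar z))]).
        eapply wequiv_trans.
        { apply wequiv_app_l with (v := lam B (tgt z)). simpl. repeat split. apply gm_src.
          symmetry; apply gm_tgt. apply isV_tgt.
          apply (wequiv_app_r (l:=[_]) (l':=[]) (r:=[_]) (m:=lam B (tgt z))).
          apply wequiv_one. apply gm_isV, isV_tgt.
          simpl. repeat split. apply (gm_src (lam B) (bar z)). rewrite <- gm_tgt, tgt_bar. reflexivity.
          apply isV_tgt. }
        simpl. rewrite gm_bar, gm_src. apply wequiv_inv. }
      eapply Rt_trans.
      { pose proof (Rt_tr (eq_sym E) (w:=W ++ [LE (lam B z); LG (lam B (tgt z)) (gone _); LE (lam B (bar z))]) (bsrc B z b) (Hwl _)) as R.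
        rewrite <- (trB_plus_back b E) in R at 2.
        replace (trB (eq_sym E) (trB E (bplus (bbar B z b)))) with (bplus (bbar B z b)) in R.
        exact R. destruct E. reflexivity. }
      eapply Rt_trans. rewrite <- !app_assoc in HC. exact HC.
      apply Rt_tr. rewrite E. apply Hwl.
    + rewrite <- app_assoc. reflexivity.
Qed.


Lemma bar_vert (G : Graph) (y : G) : isV y -> bar y = y.
Proof. intro H. symmetry. apply vert_iff. symmetry. exact H. Qed.

Lemma tr_sym (A : Type) (P : A -> Type) a b (H : a = b) (u : P a) (v : P b) :
  tr P H u = v -> u = tr P (eq_sym H) v.
Proof. destruct H. simpl. auto. Qed.

Lemma LG_vert_edge (G : GoG) (x : G) (g : ggrp G x) : isV x ->
  LG (src x) (hsrc G x g) = LG (tgt x) (hplus g).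
Proof.
  intro Hx. pose proof (bar_vert Hx) as Hb.
  assert (E1 : LG (src x) (hsrc G x g) = LG x g).
  { rewrite <- (LG_tr Hx). f_equal. apply hsrc_V. }
  assert (Hu : hbar G x g = tr (fun z => gcar (ggrp G z)) (eq_sym Hb) g).
  { apply (tr_sym (P := fun z => gcar (ggrp G z))). apply hbar_V. }
  unfold hplus, tgt. rewrite Hu. rewrite (LG_hsrc_tr (eq_sym Hb)). reflexivity.
Qed.

Lemma hom_inv (G H : Grp) (f : Hom G H) (a : G) : f (ginv a) = ginv (f a).
Proof.
  apply g_cancel_l with (f a). rewrite <- hmul, gmulVr, gmulVr. apply hom_one.
Qed.

Lemma tr_inv (A : Type) (P : A -> Grp) x y (h : x = y) (a : P x) :
  tr (fun z => gcar (P z)) h (ginv a) = ginv (tr (fun z => gcar (P z)) h a).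
Proof. destruct h. reflexivity. Qed.

Lemma lsrc_invX (e : B) (g : ggrp X (rho B e)) : lsrc (rho B) e (ginv g) = ginv (lsrc (rho B) e g).
Proof. unfold lsrc. rewrite hom_inv. apply (tr_inv (P := ggrp X)). Qed.

Lemma wequiv_shift (a : Y) W W2 (k g : ggrp Y a) : isV a -> wf dag W a ->
  wequiv dag a W2 (W ++ [LG a k]) ->
  wequiv dag a (W2 ++ [LG a (gmul (ginv k) g)]) (W ++ [LG a g]).
Proof.
  intros Ha HW E. eapply wequiv_trans.
  { apply wequiv_app_r with (m := a). exact E. simpl; auto. }
  rewrite <- app_assoc. apply wequiv_app_l with (v := a); auto. simpl.
  eapply wequiv_trans. apply wequiv_mul; auto.
  rewrite gmulA, gmulVr, gmul1l. apply wequiv_refl.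
Qed.

Lemma basic_cong p0 q0 : wbasic p0 q0 -> forall z (b b2 : BS z) l2 s z' (b' : BS z') s2 z2 (b2' : BS z2) W W2,
  Push z b (p0 ++ l2) s z' b' -> Push z b2 (q0 ++ l2) s2 z2 b2' -> Rt dag z W b z W2 b2 ->
  Rt dag z' (W ++ s) b' z2 (W2 ++ s2) b2'.
Proof.
  intro Hb. destruct Hb as [v g h | v | v Hv | x | x g];
    intros z b b2 l2 s z' b' s2 z2 b2' W W2 H1 H2 HR; simpl in H1, H2.
  -
    apply Push_inv_LG in H1. destruct H1 as (h1 & E1 & H1).
    apply Push_inv_LG in H1. destruct H1 as (h1' & E1' & H1).
    apply Push_inv_LG in H2. destruct H2 as (h2 & E2 & H2).
    assert (v = rho B z) by congruence. subst v.
    apply LG_inj in E1, E1', E2. subst h1 h1' h2.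
    eapply push_cong; eauto. rewrite <- ractM. apply Rt_ract; auto.
  -
    apply Push_inv_LG in H1. destruct H1 as (h1 & E1 & H1).
    assert (v = rho B z) by congruence. subst v. apply LG_inj in E1. subst h1.
    rewrite ract1 in H1. eapply push_cong; eauto.
  -
    apply Push_inv_LE in H1.
    destruct H1 as [(Ex & _ & H1) | (e1 & Hs1 & be1 & g1 & s0 & Hr1 & Hn1 & _)].
    + eapply push_cong; eauto.
    + exfalso. apply Hn1. rewrite Hr1. exact Hv.
  -
    apply Push_inv_LE in H1.
    destruct H1 as [(Ex & Hv & H1) | (e1 & Hs1 & be1 & g1 & s0 & Hr1 & Hn1 & Hb1 & Es1 & H1)].
    + apply Push_inv_LE in H1.
      destruct H1 as [(Ex' & _ & H1) | (e1 & Hs1 & be1 & g1 & s0 & Hr1 & Hn1 & _)].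
      * eapply push_cong; eauto.
      * exfalso. apply Hn1. rewrite Hr1, Ex, bar_vert by exact Hv. exact Hv.
    + subst z x s. simpl in Hb1. subst b.
      destruct (Rt_wf HR) as [HW HW2].
      assert (HW' : wf dag (W ++ [LG (lam B (src e1)) g1]) (lam B (src e1))).
      { eapply wf_app_i; eauto. simpl. pose proof (wf_isV_end HW). auto. }
      destruct (back Hn1 HW' H1) as (W0 & s00 & b0 & HP0 & HR0 & Eq).
      replace (W ++ LG (lam B (src e1)) g1 :: LE (lam B e1) :: s0) with (W0 ++ s00)
        by (rewrite <- Eq, <- app_assoc; reflexivity).
      eapply push_cong; eauto.
      eapply Rt_trans. apply Rt_sym, HR0.
      eapply Rt_trans. apply Rt_sym, Rt_act; auto. exact HR.
  -
    apply Push_inv_LG in H1. destruct H1 as (h1 & E1 & H1).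
    apply Push_inv_LE in H1.
    destruct H1 as [(Ex & Hv & H1) | (e1 & Hs1 & be1 & g1 & s0 & Hr1 & Hn1 & Hb1 & Es1 & H1)].
    + subst x. apply Push_inv_LE in H2.
      destruct H2 as [(_ & _ & H2) | (e2 & Hs2 & be2 & g2 & s02 & Hr2 & Hn2 & _)].
      * apply Push_inv_LG in H2. destruct H2 as (h2 & E2 & H2).
        rewrite <- LG_vert_edge in E2 by exact Hv. rewrite E1 in E2. apply LG_inj in E2. subst h2.
        eapply push_cong; eauto. apply Rt_ract; auto.
      * exfalso. apply (no_mix (e:=e2)); [congruence | auto].
    + subst z x s. simpl in Hb1.
      destruct (Rt_inv HR) as (k & HW & HW2 & EW & Eb).
      rewrite <- LG_lsrcX in E1. apply LG_inj in E1. subst h1.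
      assert (Hb2 : b2 = lact (gmul (ginv k) g1) (bsrc B e1 (ract be1 (ginv g)))).
      { rewrite bsrc_ract, lsrc_invX, lactM, lract, <- Hb1, <- ractM, gmulVr, ract1, Eb, <- lactM,
          gmulVl, lact1. reflexivity. }
      assert (HQ : Push (src e1) b2 (LE (rho B e1) :: LG (tgt (rho B e1)) (hplus g) :: l2)
                     (LG (lam B (src e1)) (gmul (ginv k) g1) :: LE (lam B e1) :: s0) z' b').
      { rewrite Hb2. apply P_e; auto. rewrite <- LG_lplusX. apply P_g.
        rewrite <- bplus_ract, <- ractM, gmulVl, ract1. exact H1. }
      eapply Rt_trans. 2: apply (push_cong HQ H2 (Rt_refl _ HW2)).
      destruct (Push_wf H1 (isV_tgt e1)) as [Hs0 _].
      assert (Hl : isV (lam B (src e1))) by apply gm_isV, isV_src.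
      assert (Hs' : forall g', wf (lam B (src e1)) (LG (lam B (src e1)) g' :: LE (lam B e1) :: s0) (lam B z')).
      { intro g'. simpl. repeat split; auto. apply gm_src. rewrite <- gm_tgt. exact Hs0. }
      apply Rt_word; try (eapply wf_app_i; eauto; fail).
      change (LG (lam B (src e1)) g1 :: LE (lam B e1) :: s0) with ([LG (lam B (src e1)) g1] ++ LE (lam B e1) :: s0).
      change (LG (lam B (src e1)) (gmul (ginv k) g1) :: LE (lam B e1) :: s0)
        with ([LG (lam B (src e1)) (gmul (ginv k) g1)] ++ LE (lam B e1) :: s0).
      rewrite !app_assoc. apply wequiv_app_r with (m := lam B (src e1)).
      apply wequiv_sym, wequiv_shift; auto.
      simpl. specialize (Hs' g1). simpl in Hs'. tauto.
Qed.


Lemma wstep_cong (a w : X) p p' : wstep a w p p' ->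
  forall z (b b2 : BS z) s z' (b' : BS z') s2 z2 (b2' : BS z2) W W2,
  Push z b p s z' b' -> Push z b2 p' s2 z2 b2' -> Rt dag z W b z W2 b2 ->
  Rt dag z' (W ++ s) b' z2 (W2 ++ s2) b2'.
Proof.
  intros (l1 & p0 & q0 & l2 & a' & b'' & -> & -> & Hb & _) z b b2 s z' b' s2 z2 b2' W W2 H1 H2 HR.
  destruct (Push_app H1 (l1:=l1) (l2:=p0 ++ l2) eq_refl) as (s1 & zm & bm & s1r & HA & HB & ->).
  destruct (Push_app H2 (l1:=l1) (l2:=q0 ++ l2) eq_refl) as (s1' & zm' & bm' & s1r' & HA' & HB' & ->).
  pose proof (push_cong HA HA' HR) as HRm. pose proof (Rt_eq HRm) as Ez. subst zm'.
  rewrite !app_assoc. eapply basic_cong; eauto.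
Qed.

Lemma crst_wf (a w : X) p p' : wequiv a w p p' -> (wf a p w <-> wf a p' w).
Proof.
  intro H. induction H.
  - apply wstep_wf in H. tauto.
  - tauto.
  - tauto.
  - tauto.
Qed.

Lemma wequiv_cong (a w : X) p p' : wequiv a w p p' -> wf a p w ->
  forall z (b b2 : BS z) s z' (b' : BS z') s2 z2 (b2' : BS z2) W W2,
  isV z -> rho B z = a ->
  Push z b p s z' b' -> Push z b2 p' s2 z2 b2' -> Rt dag z W b z W2 b2 ->
  Rt dag z' (W ++ s) b' z2 (W2 ++ s2) b2'.
Proof.
  intro H. induction H as [x y Hs | x | x y Hxy IH | x y u Hxy IH1 Hyu IH2];
    intros Hw z b b2 s z' b' s2 z2 b2' W W2 Hz Ea H1 H2 HR.
  - eapply wstep_cong; eauto.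
  - eapply push_cong; eauto.
  - assert (Hy : wf a x w) by (apply (proj2 (crst_wf Hxy)); auto).
    apply Rt_sym. eapply IH; eauto. apply Rt_sym; auto.
  - assert (Hy : wf a y w) by (apply (proj1 (crst_wf Hxy)); auto).
    subst a. destruct (Push_ex b Hz Hy) as (sy & zy & by_ & Hpy).
    destruct (Rt_wf HR) as [HW _].
    eapply Rt_trans. eapply IH1; eauto. apply Rt_refl; auto.
    eapply IH2; eauto.
Qed.

Lemma fbbasic_cong (e e' : fbraw B) : fbvalid dag st e -> fbvalid dag st e' -> fbbasic dag st e e' ->
  forall s z' (b' : BS z') s2 z2 (b2' : BS z2),
  Push (fz e) (fb e) (fp e) s z' b' -> Push (fz e') (fb e') (fp e') s2 z2 b2' ->
  Rt dag z' (fq e ++ s) b' z2 (fq e' ++ s2) b2'.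
Proof.
  intros Hv Hv' Hb. destruct Hv as (Hz & Hq & Hp), Hv' as (Hz' & Hq' & Hp').
  destruct Hb as [z q q' b p E | z q b p p' E | z q g b p | z q b h p | z q b p Hn];
    simpl in *; intros s z' b' s2 z2 b2' H1 H2.
  - eapply push_cong; eauto. apply Rt_word; auto.
  - eapply wequiv_cong; eauto. apply Rt_refl; auto.
  - eapply push_cong; eauto. apply Rt_sym, Rt_act.
    apply wf_app in Hq. destruct Hq as (m & Hq1 & Hq2). simpl in Hq2. destruct Hq2 as (_ & <- & _). auto.
  - apply Push_inv_LG in H2. destruct H2 as (h2 & E2 & H2). apply LG_inj in E2. subst h2.
    eapply push_cong; eauto. apply Rt_refl; auto.
  - destruct HF as [Hsimp _].
    assert (Hn' : ~ isV (rho B z)) by (apply Hsimp; auto).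
    destruct (back Hn' Hq H2) as (W0 & s0 & b0 & HP0 & HR0 & Eq).
    rewrite <- app_assoc. simpl. rewrite Eq.
    eapply push_cong; eauto.
Qed.

Lemma crst_valid (e e' : fbraw B) : fbequiv dag st e e' -> (fbvalid dag st e <-> fbvalid dag st e').
Proof.
  intro H. induction H.
  - destruct H as (? & ? & _). tauto.
  - tauto.
  - tauto.
  - tauto.
Qed.

Lemma Push_ex_fb (e : fbraw B) : fbvalid dag st e ->
  exists s z' (b' : BS z'), Push (fz e) (fb e) (fp e) s z' b'.
Proof. intros (Hz & _ & Hp). eapply Push_ex; eauto. Qed.

Lemma fbequiv_cong (e e' : fbraw B) : fbequiv dag st e e' -> fbvalid dag st e ->
  forall s z' (b' : BS z') s2 z2 (b2' : BS z2),
  Push (fz e) (fb e) (fp e) s z' b' -> Push (fz e') (fb e') (fp e') s2 z2 b2' ->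
  Rt dag z' (fq e ++ s) b' z2 (fq e' ++ s2) b2'.
Proof.
  intro H. induction H as [x y Hs | x | x y Hxy IH | x y u Hxy IH1 Hyu IH2];
    intros Hv s z' b' s2 z2 b2' H1 H2.
  - destruct Hs as (Hx & Hy & Hb). eapply fbbasic_cong; eauto.
  - destruct Hv as (Hz & Hq & Hp). eapply push_cong; eauto. apply Rt_refl; auto.
  - assert (Hy : fbvalid dag st x) by (apply (proj2 (crst_valid Hxy)); auto).
    apply Rt_sym. eapply IH; eauto.
  - assert (Hy : fbvalid dag st y) by (apply (proj1 (crst_valid Hxy)); auto).
    destruct (Push_ex_fb Hy) as (sy & zy & by_ & Hpy).
    eapply Rt_trans. eapply IH1; eauto. eapply IH2; eauto.
Qed.

End Main.


Section Quot.
Variables (T : Type) (R : T -> T -> Prop).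
Definition cls (a : T) : quot R :=
  exist _ (fun u => clos_refl_sym_trans T R a u) (ex_intro _ a (fun u => iff_refl _)).
Definition rep (P : quot R) : T := proj1_sig (constructive_indefinite_description _ (proj2_sig P)).
Lemma rep_spec (P : quot R) : forall y, proj1_sig P y <-> clos_refl_sym_trans T R (rep P) y.
Proof. unfold rep. destruct (constructive_indefinite_description _ _). simpl. auto. Qed.
Lemma quot_ext (P Q : quot R) : (forall y, proj1_sig P y <-> proj1_sig Q y) -> P = Q.
Proof.
  destruct P as [P HP], Q as [Q HQ]. simpl. intro H.
  assert (P = Q) by (apply functional_extensionality; intro; apply propositional_extensionality; auto).
  subst Q. f_equal. apply proof_irrelevance.
Qed.
Lemma cls_eq (a b : T) : clos_refl_sym_trans T R a b -> cls a = cls b.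
Proof.
  intro H. apply quot_ext. simpl. intro y. split; intro H'.
  - eapply rst_trans. apply rst_sym, H. exact H'.
  - eapply rst_trans. exact H. exact H'.
Qed.
Lemma cls_inv (a b : T) : cls a = cls b -> clos_refl_sym_trans T R a b.
Proof.
  intro H. assert (E := f_equal (fun P => proj1_sig P b) H). simpl in E. rewrite E. apply rst_refl.
Qed.
Lemma quot_eta (P : quot R) : P = cls (rep P).
Proof. apply quot_ext. intro y. simpl. apply rep_spec. Qed.
End Quot.

Section Final.
Variables (Y X : GoG) (B : GoB Y X) (dag : Y) (st : X).
Hypothesis HF : left_fibrant B.
Hypothesis Hfree : forall z : B, left_free_set (bset B z).
Hypothesis Hdag : isV dag.
Hypothesis Hst : isV st.

Notation BS z := (bcar (bset B z)).
Notation trB := (tr (fun z => bcar (bset B z))).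
Notation mk z q b p := (@FBR Y X B z q b p).

Lemma Rt_fib z1 w1 (b1 : BS z1) z2 w2 (b2 : BS z2) : Rt dag z1 w1 b1 z2 w2 b2 ->
  exists g : ggrp Y (lam B z2), existT (fun z => BS z) z2 (lact g b2) = existT _ z1 b1.
Proof. intro H. destruct H. exists k. subst. reflexivity. Qed.

Theorem left_free_part : fb_left_free B dag st.
Proof.
  intros r e Hr Hv E. destruct e as [z q b p]. destruct (Push_ex_fb HF Hv) as (s & z' & b' & HP).
  simpl in HP.
  destruct Hv as (Hz & Hq & Hp). simpl in Hz, Hq, Hp.
  assert (Hv' : fbvalid dag st (fbact r (mk z q b p))).
  { repeat split; simpl; auto. eapply wf_app_i; eauto. }
  pose proof (fbequiv_cong HF E Hv' HP HP) as HR. simpl in HR.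
  apply Rt_inv in HR. destruct HR as (k & HW & HW2 & EW & Eb).
  apply eq_sym, Hfree in Eb. subst k.
  destruct (Push_wf HP Hz) as [Hs _].
  apply (wequiv_cancel_r (w:=lam B z') (l:=q ++ s)).
  - exact Hr.
  - simpl; auto.
  - exact HW2.
  - rewrite app_assoc. simpl. apply wequiv_sym.
    eapply wequiv_trans. exact EW. apply wequiv_sym, wequiv_k1. exact HW.
Qed.

Lemma Push_ex_fb' (e : fbraw B) : fbvalid dag st e ->
  exists t : {s : list (letter Y) & {z' : B & BS z'}},
    Push (fz e) (fb e) (fp e) (projT1 t) (projT1 (projT2 t)) (projT2 (projT2 t)).
Proof.
  intro H. destruct (Push_ex_fb HF H) as (s & z' & b' & HP). exists (existT _ s (existT _ z' b')). exact HP.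
Qed.

Definition pt (x : fbelt B dag st) := proj1_sig (constructive_indefinite_description _ (Push_ex_fb' (proj2_sig x))).
Lemma pt_spec x : Push (fz (proj1_sig x)) (fb (proj1_sig x)) (fp (proj1_sig x))
  (projT1 (pt x)) (projT1 (projT2 (pt x))) (projT2 (projT2 (pt x))).
Proof. unfold pt. destruct (constructive_indefinite_description _ _). exact p. Qed.
Lemma pt_end x : rho B (projT1 (projT2 (pt x))) = st.
Proof. destruct x as [e (Hz & Hq & Hp)]. eapply Push_end. apply (pt_spec (exist _ e (conj Hz (conj Hq Hp)))). exact Hp. Qed.
Definition pF (x : fbelt B dag st) : fib_elt B st :=
  exist _ (existT (fun z => BS z) (projT1 (projT2 (pt x))) (projT2 (projT2 (pt x)))) (pt_end x).

Lemma orbit_a (x y : fbelt B dag st) : fb_lorbit x y -> fib_lorbit (pF y) (pF x).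
Proof.
  intros (r & Hr & E).
  destruct x as [ex Hx], y as [ey Hy].
  pose proof (pt_spec (exist _ ex Hx)) as Px. pose proof (pt_spec (exist _ ey Hy)) as Py.
  simpl in *.
  assert (Hv' : fbvalid dag st (fbact r ex)).
  { destruct Hx as (Hz & Hq & Hp). repeat split; simpl; auto. eapply wf_app_i; eauto. }
  pose proof (fbequiv_cong HF E Hv' Px Py) as HR.
  apply Rt_fib in HR. unfold fib_lorbit, pF. simpl. exact HR.
Qed.

Lemma exT_tr z z' (H : z = z') (b : BS z) : existT (fun z => BS z) z' (trB H b) = existT _ z b.
Proof. destruct H. reflexivity. Qed.

Lemma valid_final z W (b : BS z) : isV z -> rho B z = st -> wf dag W (lam B z) -> fbvalid dag st (mk z W b []).
Proof. intros. repeat split; simpl; auto. rewrite H0. auto. Qed.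

Lemma orbit_b (x y : fbelt B dag st) : fib_lorbit (pF x) (pF y) -> fb_lorbit x y.
Proof.
  destruct x as [ex Hx], y as [ey Hy].
  pose proof (pt_spec (exist _ ex Hx)) as Px. pose proof (pt_spec (exist _ ey Hy)) as Py.
  pose proof (pt_end (exist _ ex Hx)) as Ex. pose proof (pt_end (exist _ ey Hy)) as Ey.
  unfold fib_lorbit, pF. simpl in *.
  destruct (pt (exist _ ex Hx)) as [sx [zx bx]], (pt (exist _ ey Hy)) as [sy [zy by_]]. simpl in *.
  intros [g Eg]. pose proof (f_equal (@projT1 _ _) Eg) as Ez. simpl in Ez. subst zy.
  apply inj_pair2 in Eg. subst by_.
  destruct ex as [z q b p], ey as [z2 q2 b2 p2]. simpl in *.
  destruct Hx as (Hz & Hq & Hp), Hy as (Hz2 & Hq2 & Hp2). simpl in *.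
  destruct (Push_wf Px Hz) as [Hsx Hzx]. destruct (Push_wf Py Hz2) as [Hsy _].
  assert (HWx : wf dag (q ++ sx) (lam B zx)) by (eapply wf_app_i; eauto).
  assert (HWy : wf dag (q2 ++ sy) (lam B zx)) by (eapply wf_app_i; eauto).
  assert (Hlx : isV (lam B zx)) by (apply gm_isV; auto).
  assert (Hrw : wf dag ((q2 ++ sy) ++ [LG (lam B zx) g] ++ winv (q ++ sx)) dag).
  { eapply wf_app_i. exact HWy. eapply wf_app_i. simpl; auto. apply wf_winv; exact HWx. }
  exists ((q2 ++ sy) ++ [LG (lam B zx) g] ++ winv (q ++ sx)). split. exact Hrw.
  simpl.
  eapply rst_trans.
  { apply (Push_equiv (dag:=dag) (st:=st) Px). repeat split; simpl; auto. eapply wf_app_i. exact Hrw. exact Hq. }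
  eapply rst_trans. 2:{ apply rst_sym. apply (Push_equiv (dag:=dag) (st:=st) Py). repeat split; simpl; auto. }
  assert (HWg : wf dag ((q2 ++ sy) ++ [LG (lam B zx) g]) (lam B zx)) by (eapply wf_app_i; eauto; simpl; auto).
  assert (EW : wequiv dag (lam B zx) ((((q2 ++ sy) ++ [LG (lam B zx) g] ++ winv (q ++ sx)) ++ q) ++ sx)
                 ((q2 ++ sy) ++ [LG (lam B zx) g])).
  { replace ((((q2 ++ sy) ++ [LG (lam B zx) g] ++ winv (q ++ sx)) ++ q) ++ sx)
      with (((q2 ++ sy) ++ [LG (lam B zx) g]) ++ (winv (q ++ sx) ++ (q ++ sx)))
      by (rewrite <- !app_assoc; reflexivity).
    replace ((q2 ++ sy) ++ [LG (lam B zx) g]) with (((q2 ++ sy) ++ [LG (lam B zx) g]) ++ []) at 2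
      by apply app_nil_r.
    apply wequiv_app_l with (v := lam B zx). exact HWg. eapply wcancel_l; eauto. }
  eapply rst_trans.
  { apply fbs. 3: apply fb_wq with (q' := (q2 ++ sy) ++ [LG (lam B zx) g]). 3: exact EW.
    all: apply valid_final; auto. eapply wf_app_i. eapply wf_app_i. exact Hrw. exact Hq. exact Hsx. }
  apply fbs. 3: apply fb_tl. all: apply valid_final; auto.
Qed.


Lemma orbit_crst (x y : fbelt B dag st) : clos_refl_sym_trans _ (@fb_lorbit _ _ B dag st) x y ->
  clos_refl_sym_trans _ (@fib_lorbit _ _ B st) (pF x) (pF y).
Proof.
  intro H. induction H.
  - apply rst_sym, rst_step, orbit_a; auto.
  - apply rst_refl.
  - apply rst_sym; auto.
  - eapply rst_trans; eauto.
Qed.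

Lemma fib_lorbit_equiv (a c : fib_elt B st) : clos_refl_sym_trans _ (@fib_lorbit _ _ B st) a c -> fib_lorbit a c.
Proof.
  intro H. induction H as [x y H1 | x | x y H1 IH | x y w H1 IH1 H2 IH2].
  - auto.
  - destruct x as [[z b] Hz]. exists (gone _). simpl. rewrite lact1. reflexivity.
  - destruct x as [[z b] Hz], y as [[z' b'] Hz']. destruct IH as [g Eg]. simpl in *.
    pose proof (f_equal (@projT1 _ _) Eg) as Ez. simpl in Ez. subst z'.
    apply inj_pair2 in Eg. subst b'. exists (ginv g). simpl. rewrite <- lactM, gmulVl, lact1. reflexivity.
  - destruct x as [[z b] Hz], y as [[z' b'] Hz'], w as [[z'' b''] Hz''].
    destruct IH1 as [g Eg], IH2 as [g' Eg']. simpl in *.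
    pose proof (f_equal (@projT1 _ _) Eg) as Ez. simpl in Ez. subst z'.
    apply inj_pair2 in Eg. subst b'.
    pose proof (f_equal (@projT1 _ _) Eg') as Ez. simpl in Ez. subst z''.
    apply inj_pair2 in Eg'. subst b''. exists (gmul g' g). simpl. rewrite lactM. reflexivity.
Qed.

Lemma reach_path (G : GoG) (v w : G) : reach v w -> isV v -> exists l, wf v l w.
Proof.
  intros H Hv. induction H.
  - exists []. simpl. auto.
  - destruct IHreach as [l Hl]. exists (l ++ [LE e]). eapply wf_app_i. exact Hl.
    simpl. repeat split; auto. apply isV_tgt.
Qed.

Definition fmap (P : fb_orbits B dag st) : fib_orbits B st := cls (@fib_lorbit _ _ B st) (pF (rep P)).

Lemma fmap_bij : bijective fmap.
Proof.
  split.
  - intros P P' E. unfold fmap in E. apply cls_inv, fib_lorbit_equiv, orbit_b in E.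
    rewrite (quot_eta P), (quot_eta P'). apply cls_eq, rst_step. exact E.
  - intro Q. rewrite (quot_eta Q). destruct (rep Q) as [[z b] Hz] eqn:Ey. simpl in Hz.
    assert (HzV : isV z).
    { destruct (classic (isV z)) as [H|H]; auto. exfalso. destruct HF as [Hs _].
      apply (Hs z H). rewrite Hz. exact Hst. }
    destruct (reach_path (@gconn Y dag (lam B z) Hdag (gm_isV (lam B) HzV)) Hdag) as [l Hl].
    assert (Hv : fbvalid dag st (mk z l b [])).
    { repeat split; simpl; auto. rewrite Hz. exact Hst. }
    pose (x := exist (fbvalid dag st) (mk z l b []) Hv).
    exists (cls (@fb_lorbit _ _ B dag st) x). unfold fmap. apply cls_eq.
    eapply rst_trans.
    { apply orbit_crst. apply (rep_spec (cls (@fb_lorbit _ _ B dag st) x) x). simpl. apply rst_refl. }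
    apply rst_step. pose proof (pt_spec x) as Px. unfold x in Px at 1. simpl in Px.
    unfold fib_lorbit, pF. simpl.
    revert Px. generalize (pt x). intros [s [z' b']] Px. simpl in *.
    apply Push_inv_nil in Px. destruct Px as [_ [H Hb]]. subst b'.
    exists (gone _). rewrite lact1. apply exT_tr.
Qed.

End Final.

Theorem mainTheorem17 (Y X : GoG) (B : GoB Y X) (dag : Y) (st : X) :
  isV dag -> isV st -> left_free B ->
  fb_left_free B dag st /\
  exists f : fb_orbits B dag st -> fib_orbits B st, bijective f.
Proof.
  intros Hdag Hst [HF Hfree]. split.
  - apply left_free_part; auto.
  - exists (@fmap Y X B dag st HF). apply fmap_bij; auto.
Qed.
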